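(* Let $M>0$, $\beta^*>0$, $0<I_0<M$, and let $g$ be the log-normal density $g(t)=\frac{1}{t\sigma\sqrt{2\pi}}\exp\!\big(-\frac{(\ln t-\mu)^2}{2\sigma^2}\big)$ for $t>0$, $g(t)=0$ for $t\le0$ ($\mu\in\mathbb{R}$, $\sigma>0$). Let $I$ be the unique $C^1$ solution on $[0,\infty)$ of \[ I'(t)=\beta^*(M-I(t))\Big(I(t)-\int_0^t g(t-s)I(s)\,ds\Big),\qquad I(0)=I_0, \] and set $I_a(t)=I(t)-\int_0^t g(t-s)I(s)\,ds$. Then the improper integral $\int_0^\infty I_a(t)\,dt$ converges. *)

(* Defs.v *)
From Stdlib Require Import Reals Lra.
From Coquelicot Require Export Coquelicot.
Open Scope R_scope.

Definition lognormal (mu sigma : R) (t : R) : R :=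
  if Rle_dec t 0 then 0
  else / (t * sigma * sqrt (2 * PI)) * exp (- (ln t - mu) ^ 2 / (2 * sigma ^ 2)).

Definition Ia (g I : R -> R) (t : R) : R :=
  I t - RInt (fun s => g (t - s) * I s) 0 t.

(* Main.v *)
Require Import Defs.
From Stdlib Require Import Reals.
From Coquelicot Require Import Coquelicot.
From Stdlib Require Import Lra Psatz Classical.
Open Scope R_scope.

Lemma cont_pt_of (f : R -> R) x : continuous f x -> continuity_pt f x.
Proof. intros H; apply continuity_pt_filterlim; exact H. Qed.

Lemma cont_of_pt (f : R -> R) x : continuity_pt f x -> continuous f x.
Proof. intros H; apply continuity_pt_filterlim; exact H. Qed.

Lemma MVT_open (f df : R -> R) a b : a < b ->
  (forall x, a < x < b -> is_derive f x (df x)) ->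
  (forall x, a <= x <= b -> continuous f x) ->
  exists c, a < c < b /\ f b - f a = df c * (b - a).
Proof.
  intros hab hd hc.
  assert (pr1 : forall c, a < c < b -> derivable_pt f c).
  { intros c hc'. exists (df c). apply is_derive_Reals. apply hd; auto. }
  assert (pr2 : forall c, a < c < b -> derivable_pt id c).
  { intros c _. apply derivable_pt_id. }
  destruct (MVT f id a b pr1 pr2 hab) as [c [P HP]].
  - intros; apply cont_pt_of, hc; auto.
  - intros; apply derivable_continuous_pt, derivable_pt_id.
  - exists c. split; auto.
    rewrite (derive_pt_eq_0 f c (df c) (pr1 c P)) in HP.
    2: { apply is_derive_Reals, hd; auto. }
    rewrite (derive_pt_eq_0 id c 1 (pr2 c P)) in HP.
    2: { apply derivable_pt_lim_id. }
    unfold id in HP. lra.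
Qed.

Lemma mono_le (f df : R -> R) a b : a <= b ->
  (forall x, a < x < b -> is_derive f x (df x)) ->
  (forall x, a <= x <= b -> continuous f x) ->
  (forall x, a < x < b -> 0 <= df x) -> f a <= f b.
Proof.
  intros hab hd hc hp. destruct (Req_dec a b) as [->|hne]; [lra|].
  destruct (MVT_open f df a b) as [c [hc1 hc2]]; auto; try lra.
  specialize (hp c hc1). nra.
Qed.

Lemma mono_lt (f df : R -> R) a b : a < b ->
  (forall x, a < x < b -> is_derive f x (df x)) ->
  (forall x, a <= x <= b -> continuous f x) ->
  (forall x, a < x < b -> 0 < df x) -> f a < f b.
Proof.
  intros hab hd hc hp.
  destruct (MVT_open f df a b) as [c [hc1 hc2]]; auto.
  specialize (hp c hc1). nra.
Qed.

Lemma const_eq (f : R -> R) a b : a <= b ->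
  (forall x, a < x < b -> is_derive f x 0) ->
  (forall x, a <= x <= b -> continuous f x) -> f a = f b.
Proof.
  intros hab hd hc. destruct (Req_dec a b) as [->|hne]; [lra|].
  destruct (MVT_open f (fun _ => 0) a b) as [c [hc1 hc2]]; auto; try lra.
Qed.

Lemma ball_R (x e y : R) : ball x e y <-> Rabs (y - x) < e.
Proof. reflexivity. Qed.

Lemma RInt_comp_lin_R (f : R -> R) u v a b : ex_RInt f (u*a+v) (u*b+v) ->
  @eq R (RInt (fun y => u * f (u*y+v)) a b) (RInt f (u*a+v) (u*b+v)).
Proof. intros H. exact (RInt_comp_lin (V:=R_CompleteNormedModule) f u v a b H). Qed.
Lemma RInt_scal_R (f : R -> R) a b l : ex_RInt f a b ->
  @eq R (RInt (fun x => l * f x) a b) (l * RInt f a b).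
Proof. intros H. exact (RInt_scal (V:=R_CompleteNormedModule) f a b l H). Qed.
Lemma RInt_Chasles_R (f : R -> R) a b c : ex_RInt f a b -> ex_RInt f b c ->
  @eq R (RInt f a b + RInt f b c) (RInt f a c).
Proof. intros H1 H2. exact (RInt_Chasles (V:=R_CompleteNormedModule) f a b c H1 H2). Qed.
Lemma RInt_const_R a b (c : R) : @eq R (RInt (fun _ => c) a b) ((b - a) * c).
Proof. exact (RInt_const (V:=R_CompleteNormedModule) a b c). Qed.
Lemma RInt_point_R a (f : R -> R) : @eq R (RInt f a a) 0.
Proof. exact (RInt_point (V:=R_CompleteNormedModule) a f). Qed.
Lemma RInt_minus_R (f g : R -> R) a b : ex_RInt f a b -> ex_RInt g a b ->
  @eq R (RInt (fun x => f x - g x) a b) (RInt f a b - RInt g a b).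
Proof. intros H1 H2. exact (RInt_minus (V:=R_CompleteNormedModule) f g a b H1 H2). Qed.
Lemma RInt_plus_R (f g : R -> R) a b : ex_RInt f a b -> ex_RInt g a b ->
  @eq R (RInt (fun x => f x + g x) a b) (RInt f a b + RInt g a b).
Proof. intros H1 H2. exact (RInt_plus (V:=R_CompleteNormedModule) f g a b H1 H2). Qed.
Lemma RInt_swap_R (f : R -> R) a b : ex_RInt f a b -> @eq R (RInt f b a) (- RInt f a b).
Proof. intros H. rewrite <- (opp_RInt_swap (V:=R_CompleteNormedModule) f a b H). reflexivity. Qed.
Lemma RInt_ext_R (f g : R -> R) a b : (forall x, Rmin a b < x < Rmax a b -> f x = g x) -> @eq R (RInt f a b) (RInt g a b).
Proof. intros H. exact (RInt_ext (V:=R_CompleteNormedModule) f g a b H). Qed.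

Lemma deriv_RInt_cont (f:R->R) a x : (forall y, continuous f y) ->
  is_derive (fun b => RInt f a b) x (f x).
Proof.
  intros hf. apply is_derive_RInt with a.
  - apply filter_forall; intros; apply RInt_correct, ex_RInt_continuous; auto.
  - auto.
Qed.

Lemma exd_cont (f:R->R) x : ex_derive f x -> continuous f x.
Proof. intros H. exact (ex_derive_continuous (K:=R_AbsRing) (V:=R_NormedModule) f x H). Qed.

Lemma exRI (f:R->R) a b : (forall z, continuous f z) -> ex_RInt f a b.
Proof. intros H. apply (ex_RInt_continuous (V:=R_CompleteNormedModule)). intros; apply H. Qed.

Definition ge (t : R) := exp (-(t*t)).
Definition E (x : R) : R := RInt ge 0 x.

Lemma ge_cont x : continuous ge x.
Proof. apply exd_cont. unfold ge. auto_derive. trivial. Qed.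

Lemma E_deriv x : is_derive E x (ge x).
Proof. apply deriv_RInt_cont, ge_cont. Qed.

Definition hf (u t : R) := exp (-(u*u*(1+t*t))) / (1+t*t).
Definition hh (x : R) : R := RInt (fun t => hf x t) 0 1.

Lemma pos1 t : 0 < 1 + t*t.
Proof. nra. Qed.

Lemma hf_Derive u v : Derive (fun z => hf z v) u = -2*u*exp(-(u*u*(1+v*v))).
Proof.
  apply is_derive_unique. unfold hf. auto_derive.
  - trivial.
  - field. apply Rgt_not_eq, pos1.
Qed.

Lemma hf_cont2 x t :
  continuity_2d_pt (fun u v => Derive (fun z => hf z v) u) x t.
Proof.
  apply continuity_2d_pt_ext with (f := fun u v => -2*u*exp(-(u*u*(1+v*v)))).
  { intros; symmetry; apply hf_Derive. }
  apply continuity_2d_pt_mult.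
  - apply continuity_2d_pt_mult. apply continuity_2d_pt_const. apply continuity_2d_pt_id1.
  - apply continuity_1d_2d_pt_comp with (f := exp) (g := fun u v => -(u*u*(1+v*v))).
    + apply derivable_continuous_pt, derivable_pt_exp.
    + apply continuity_2d_pt_opp. apply continuity_2d_pt_mult.
      * apply continuity_2d_pt_mult; apply continuity_2d_pt_id1.
      * apply continuity_2d_pt_plus. apply continuity_2d_pt_const.
        apply continuity_2d_pt_mult; apply continuity_2d_pt_id2.
Qed.

Lemma hf_cont1 x t : continuous (fun t => hf x t) t.
Proof. apply exd_cont. unfold hf. auto_derive. apply Rgt_not_eq, pos1. Qed.

Lemma scalR (a b : R) : scal a b = a * b.
Proof. reflexivity. Qed.
Ltac sc := unfold scal; simpl; unfold mult; simpl.

Lemma hh_deriv x : is_derive hh x (-2 * ge x * E x).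
Proof.
  unfold hh.
  eapply is_derive_ext.
  { intros; reflexivity. }
  assert (H := is_derive_RInt_param hf 0 1 x).
  replace (-2 * ge x * E x) with (RInt (fun t => Derive (fun u => hf u t) x) 0 1).
  apply H.
  - apply filter_forall. intros. unfold hf. auto_derive. trivial.
  - intros; apply hf_cont2.
  - apply filter_forall; intros; apply exRI; intros; apply hf_cont1.
  - rewrite (RInt_ext_R _ (fun t => x * ((fun y => -2 * ge x * ge y) (x * t + 0))) ).
    2: { intros t _. rewrite hf_Derive. unfold ge.
         replace (-(x*x*(1+t*t))) with (-(x*x) + -((x*t+0)*(x*t+0))) by ring.
         rewrite exp_plus. ring. }
    rewrite (RInt_comp_lin_R (fun y => -2 * ge x * ge y) x 0 0 1).
    2: { apply exRI; intros; apply exd_cont; unfold ge; auto_derive; trivial. }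
    rewrite Rmult_0_r, Rmult_1_r, !Rplus_0_r.
    rewrite RInt_scal_R; [ | apply exRI; intros; apply ge_cont]. unfold E. reflexivity.
Qed.

Lemma E_ex x : ex_derive E x.
Proof. eexists; apply E_deriv. Qed.
Lemma hh_ex x : ex_derive hh x.
Proof. eexists; apply hh_deriv. Qed.

Lemma DE y : Derive (fun z : R => E z) y = ge y.
Proof. apply is_derive_unique, E_deriv. Qed.
Lemma Dhh y : Derive (fun z : R => hh z) y = -2 * ge y * E y.
Proof. apply is_derive_unique, hh_deriv. Qed.

Lemma E0 : E 0 = 0.
Proof. unfold E; apply RInt_point_R. Qed.

Lemma atan_is_derive x : is_derive atan x (/(1 + x^2)).
Proof. apply is_derive_Reals, derivable_pt_lim_atan. Qed.

Lemma RInt_atan a b : @eq R (RInt (fun t => /(1+t^2)) a b) (atan b - atan a).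
Proof.
  apply is_RInt_unique.
  apply (is_RInt_derive (V:=R_CompleteNormedModule) atan (fun t => /(1+t^2))).
  - intros; apply atan_is_derive.
  - intros. apply exd_cont. auto_derive. nra.
Qed.

Lemma hh0 : hh 0 = PI/4.
Proof.
  unfold hh. rewrite (RInt_ext_R _ (fun t => /(1+t^2))).
  - rewrite RInt_atan, atan_1, atan_0. ring.
  - intros t _. unfold hf. replace (-(0*0*(1+t*t))) with 0 by ring.
    rewrite exp_0. field. nra.
Qed.

Lemma k_const x : 0 <= x -> E x * E x + hh x = PI/4.
Proof.
  intros hx. rewrite <- hh0. replace (hh 0) with (E 0 * E 0 + hh 0) by (rewrite E0; ring).
  symmetry. apply (const_eq (fun y => E y * E y + hh y)); auto.
  - intros y _. auto_derive. repeat first [apply E_ex | apply hh_ex | exact I | split].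
    rewrite DE, Dhh. ring.
  - intros y _. apply exd_cont. auto_derive. repeat first [apply E_ex | apply hh_ex | exact I | split].
Qed.

Lemma ge_pos x : 0 < ge x.
Proof. apply exp_pos. Qed.

Lemma hh_bounds x : 0 <= hh x <= ge x.
Proof.
  unfold hh. split.
  - apply RInt_ge_0; [lra| apply exRI; intros; apply hf_cont1 |].
    intros t _. unfold hf. apply Rle_mult_inv_pos. apply Rlt_le, exp_pos. apply pos1.
  - assert (Hc : @eq R (RInt (fun _ : R => ge x) 0 1) (ge x)) by (rewrite RInt_const_R; ring). rewrite <- Hc.
    apply RInt_le; [lra | apply exRI; intros; apply hf_cont1 | apply exRI; intros; apply continuous_const |].
    intros t _. unfold hf, ge.
    assert (exp (-(x*x*(1+t*t))) <= exp (-(x*x))).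
    { destruct (Req_dec (x*x*t*t) 0) as [h|h].
      - right. f_equal. nra.
      - left. apply exp_increasing. assert (0 <= x*x*t*t) by (replace (x*x*t*t) with ((x*t)*(x*t)) by ring; apply Rle_0_sqr). nra. }
    pose proof (pos1 t). pose proof (exp_pos (-(x*x*(1+t*t)))).
    apply Rmult_le_reg_r with (1+t*t); auto.
    unfold Rdiv. rewrite Rmult_assoc, Rinv_l by lra. 
    assert (0 < exp (-(x*x))) by apply exp_pos. nra.
Qed.

Definition sP := sqrt PI / 2.

Lemma sP_pos : 0 < sP.
Proof. unfold sP. pose proof PI_RGT_0. pose proof (sqrt_lt_R0 PI H). lra. Qed.

Lemma sP_sq : sP * sP = PI / 4.
Proof. unfold sP. pose proof PI_RGT_0. 
  replace (sqrt PI / 2 * (sqrt PI / 2)) with (sqrt PI * sqrt PI / 4) by field.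
  rewrite sqrt_sqrt; lra. Qed.

Lemma E_nonneg x : 0 <= x -> 0 <= E x.
Proof. intros hx. unfold E. apply RInt_ge_0; auto. apply exRI; intros; apply ge_cont.
  intros; apply Rlt_le, ge_pos. Qed.

Lemma E_le_pos x : 0 <= x -> E x <= sP.
Proof. intros hx. pose proof (k_const x hx). pose proof (hh_bounds x). pose proof sP_sq.
  pose proof sP_pos. pose proof (E_nonneg x hx). nra. Qed.

Lemma E_close_pos x : 0 <= x -> sP - E x <= ge x / sP.
Proof. intros hx. pose proof (k_const x hx). pose proof (hh_bounds x). pose proof sP_sq.
  pose proof sP_pos. pose proof (E_nonneg x hx).
  apply Rmult_le_reg_r with sP; auto. unfold Rdiv. rewrite Rmult_assoc, Rinv_l by lra.
  nra. Qed.

Lemma E_odd x : E (-x) = - E x.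
Proof.
  unfold E.
  assert (H := RInt_comp_lin_R ge (-1) 0 0 x).
  replace (-1*0+0) with 0 in H by ring. replace (-1*x+0) with (-x) in H by ring.
  rewrite <- H by (apply exRI; intros; apply ge_cont).
  rewrite (RInt_ext_R _ (fun y => -1 * ge y)).
  - rewrite RInt_scal_R by (apply exRI; intros; apply ge_cont). ring.
  - intros y _. unfold ge. f_equal. f_equal. ring.
Qed.

Lemma E_le x : E x <= sP.
Proof. destruct (Rle_dec 0 x). apply E_le_pos; auto.
  replace x with (- - x) by ring. rewrite E_odd. pose proof (E_nonneg (-x)). pose proof sP_pos. lra. Qed.

Lemma E_ge x : - sP <= E x.
Proof. replace x with (- - x) by ring. rewrite E_odd. pose proof (E_le (-x)). lra. Qed.

Lemma E_close_neg x : x <= 0 -> E x + sP <= ge x / sP.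
Proof. intros hx. replace x with (- - x) by ring. rewrite E_odd.
  pose proof (E_close_pos (-x)). replace (ge (- - x)) with (ge (-x)).
  - lra.
  - unfold ge. f_equal. ring. Qed.

Lemma exp_le a b : a <= b -> exp a <= exp b.
Proof. intros [h|h]; [left; apply exp_increasing; auto | right; subst; auto]. Qed.

Definition qf (mu sigma t : R) := exp (- (ln t - mu) ^ 2 / (2 * sigma ^ 2)).
Definition c0 (sigma : R) := / (sigma * sqrt (2 * PI)).

Lemma sqrt2PI_pos : 0 < sqrt (2 * PI).
Proof. apply sqrt_lt_R0. pose proof PI_RGT_0. lra. Qed.

Lemma c0_pos sigma : 0 < sigma -> 0 < c0 sigma.
Proof. intros. unfold c0. apply Rinv_0_lt_compat. pose proof sqrt2PI_pos. nra. Qed.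

Lemma g_nonpos mu sigma t : t <= 0 -> lognormal mu sigma t = 0.
Proof. intros h. unfold lognormal. destruct (Rle_dec t 0); [auto|lra]. Qed.

Lemma g_pos_eq mu sigma t : 0 < sigma -> 0 < t -> lognormal mu sigma t = c0 sigma * qf mu sigma t / t.
Proof. intros hs h. unfold lognormal, c0, qf. destruct (Rle_dec t 0); [lra|].
  pose proof sqrt2PI_pos. field. repeat split; lra. Qed.

Lemma quad_aux (y s2 e : R) : 0 < s2 -> e * e = 1 -> - y ^ 2 / (2 * s2) <= 2 * s2 + 2 * e * y.
Proof. intros hs he.
  assert (H : 2 * s2 + 2 * e * y - (- y ^ 2 / (2 * s2)) = (y + 2 * e * s2) ^ 2 / (2 * s2)).
  { replace ((y + 2 * e * s2) ^ 2) with (y^2 + 4*e*s2*y + 4*(e*e)*s2^2) by ring. rewrite he. field. lra. }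
  assert (0 <= (y + 2 * e * s2) ^ 2 / (2 * s2)).
  { apply Rle_mult_inv_pos; [apply pow2_ge_0|lra]. }
  lra.
Qed.

Lemma tt_exp t : 0 < t -> t * t = exp (2 * ln t).
Proof. intros h. replace (2 * ln t) with (ln t + ln t) by ring. rewrite exp_plus, exp_ln; auto. Qed.

Lemma qf_le_small mu sigma t : 0 < sigma -> 0 < t ->
  qf mu sigma t <= exp (2 * sigma^2 - 2 * mu) * (t * t).
Proof. intros hs ht. rewrite tt_exp by auto. rewrite <- exp_plus. unfold qf. apply exp_le.
  pose proof (quad_aux (ln t - mu) (sigma^2) 1). 
  assert (0 < sigma^2) by (simpl; nra). 
  replace (2 * sigma ^ 2 - 2 * mu + 2 * ln t) with (2 * sigma^2 + 2 * 1 * (ln t - mu)) by ring.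
  apply H; auto; ring.
Qed.

Lemma qf_le_large mu sigma t : 0 < sigma -> 0 < t ->
  qf mu sigma t * (t * t) <= exp (2 * sigma^2 + 2 * mu).
Proof. intros hs ht. rewrite tt_exp by auto. unfold qf. rewrite <- exp_plus. apply exp_le.
  pose proof (quad_aux (ln t - mu) (sigma^2) (-1)). 
  assert (0 < sigma^2) by (simpl; nra). 
  assert (- (ln t - mu) ^ 2 / (2 * sigma ^ 2) <= 2 * sigma^2 + 2 * (-1) * (ln t - mu)) by (apply H; auto; ring).
  lra.
Qed.

Lemma qf_pos mu sigma t : 0 < qf mu sigma t.
Proof. apply exp_pos. Qed.

Lemma g_pos mu sigma t : 0 < sigma -> 0 < t -> 0 < lognormal mu sigma t.
Proof. intros hs ht. rewrite g_pos_eq by auto. pose proof (c0_pos sigma hs). pose proof (qf_pos mu sigma t).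
  apply Rdiv_lt_0_compat; auto. nra. Qed.

Lemma g_ge0 mu sigma t : 0 < sigma -> 0 <= lognormal mu sigma t.
Proof. intros hs. destruct (Rle_dec t 0). rewrite g_nonpos; auto; lra. left; apply g_pos; auto; lra. Qed.

Definition K1 mu sigma := c0 sigma * exp (2 * sigma^2 - 2 * mu).

Lemma g_le_lin mu sigma t : 0 < sigma -> lognormal mu sigma t <= K1 mu sigma * Rabs t.
Proof. intros hs. unfold K1. pose proof (c0_pos sigma hs). pose proof (exp_pos (2 * sigma ^ 2 - 2 * mu)).
  destruct (Rle_dec t 0).
  - rewrite g_nonpos by auto. apply Rmult_le_pos; [nra|apply Rabs_pos].
  - apply Rnot_le_lt in n. rewrite g_pos_eq by auto. rewrite (Rabs_right t) by lra.
    pose proof (qf_le_small mu sigma t hs ltac:(lra)).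
    unfold Rdiv. apply Rmult_le_reg_r with t; [lra|]. rewrite !Rmult_assoc, Rinv_l by lra.
    nra.
Qed.

Lemma g_cont mu sigma (t : R) : 0 < sigma -> continuous (lognormal mu sigma) t.
Proof.
  intros hs. destruct (Rtotal_order t 0) as [h|[h|h]].
  - apply continuous_ext_loc with (fun _ => 0).
    + exists (mkposreal (-t) ltac:(lra)). intros y hy. change R in y.
      assert (hy' : Rabs (y - t) < -t) by exact hy.
      symmetry. apply g_nonpos. apply Rabs_def2 in hy'. lra.
    + apply continuous_const.
  - subst. apply filterlim_locally. intros eps.
    pose proof (c0_pos sigma hs). pose proof (exp_pos (2 * sigma ^ 2 - 2 * mu)).
    assert (hk : 0 < K1 mu sigma) by (unfold K1; nra).
    assert (hd : 0 < eps / K1 mu sigma) by (apply Rdiv_lt_0_compat; auto; apply cond_pos).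
    exists (mkposreal _ hd). intros y hy. change R in y.
    assert (hy' : Rabs (y - 0) < eps / K1 mu sigma) by exact hy.
    change (Rabs (lognormal mu sigma y - lognormal mu sigma 0) < eps).
    rewrite (g_nonpos mu sigma 0) by lra. rewrite Rminus_0_r in *.
    pose proof (g_le_lin mu sigma y hs). pose proof (g_ge0 mu sigma y hs).
    rewrite Rabs_right by lra.
    apply Rle_lt_trans with (K1 mu sigma * Rabs y); auto.
    apply Rmult_lt_reg_r with (/ K1 mu sigma). apply Rinv_0_lt_compat; auto.
    rewrite Rmult_comm, <- Rmult_assoc, Rinv_l by lra. lra.
  - apply continuous_ext_loc with (fun y => / (y * sigma * sqrt (2 * PI)) * exp (- (ln y - mu) ^ 2 / (2 * sigma ^ 2))).
    + exists (mkposreal t h). intros y hy. change R in y.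
      assert (hy' : Rabs (y - t) < t) by exact hy. apply Rabs_def2 in hy'.
      unfold lognormal. destruct (Rle_dec y 0); [lra|auto].
    + apply exd_cont. pose proof sqrt2PI_pos. auto_derive. repeat split; try lra.
      assert (0 < t * sigma * sqrt (2 * PI)) by (apply Rmult_lt_0_compat; nra). lra.
Qed.

Definition Gf mu sigma (x : R) : R := RInt (lognormal mu sigma) 0 x.
Definition vf mu sigma (X : R) := (ln X - mu) / (sigma * sqrt 2).

Lemma G_deriv mu sigma x : 0 < sigma -> is_derive (Gf mu sigma) x (lognormal mu sigma x).
Proof. intros hs. apply deriv_RInt_cont. intros; apply g_cont; auto. Qed.
Lemma DG mu sigma x : 0 < sigma -> Derive (fun z : R => Gf mu sigma z) x = lognormal mu sigma x.
Proof. intros hs. apply is_derive_unique, G_deriv; auto. Qed.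
Lemma G_ex mu sigma x : 0 < sigma -> ex_derive (Gf mu sigma) x.
Proof. intros hs. eexists; apply G_deriv; auto. Qed.
Lemma G_cont mu sigma x : 0 < sigma -> continuous (Gf mu sigma) x.
Proof. intros hs. apply exd_cont, G_ex; auto. Qed.

Lemma sqrt2_pos : 0 < sqrt 2.
Proof. apply sqrt_lt_R0; lra. Qed.

Lemma ge_vf mu sigma X : 0 < sigma -> ge (vf mu sigma X) = qf mu sigma X.
Proof. intros hs. unfold ge, vf, qf. f_equal.
  pose proof sqrt2_pos. 
  assert (sqrt 2 * sqrt 2 = 2) by (apply sqrt_sqrt; lra).
  replace ((ln X - mu) / (sigma * sqrt 2) * ((ln X - mu) / (sigma * sqrt 2)))
    with ((ln X - mu)^2 / (sigma^2 * (sqrt 2 * sqrt 2))) by (field; split; lra).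
  rewrite H0. field. lra.
Qed.

Lemma sqrtPI_eq : sqrt PI = 2 * sP.
Proof. unfold sP. field. Qed.

Lemma Phi_deriv mu sigma x : 0 < sigma -> 0 < x ->
  is_derive (fun X => Gf mu sigma X - E (vf mu sigma X) / sqrt PI) x 0.
Proof.
  intros hs hx. unfold vf. pose proof sqrt2_pos. pose proof sP_pos. 
  auto_derive.
  - split; [apply G_ex; auto|]. split; [apply E_ex|]. split; auto.
  - rewrite DG, DE by auto.
    replace ((ln x + - mu) * / (sigma * sqrt 2)) with (vf mu sigma x) by (unfold vf; unfold Rdiv; ring).
    rewrite ge_vf by auto.
    rewrite g_pos_eq by auto. unfold c0.
    rewrite (sqrt_mult 2 PI) by (try lra; left; apply PI_RGT_0).
    set (q := qf mu sigma x). set (s2 := sqrt 2). set (sp := sqrt PI).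
    assert (0 < sp) by (unfold sp; rewrite sqrtPI_eq; lra).
    field. unfold s2 in *. repeat split; lra.
Qed.

Lemma ln_le' x y : 0 < x -> x <= y -> ln x <= ln y.
Proof. intros hx [h|h]. left; apply ln_increasing; auto. right; subst; auto. Qed.

Lemma small_zero (a C m : R) : 0 < m -> (forall e, 0 < e < m -> Rabs a <= C * e * e) -> a = 0.
Proof.
  intros hm H. destruct (Req_dec a 0) as [h|h]; auto. exfalso.
  assert (ha : 0 < Rabs a) by (apply Rabs_pos_lt; auto).
  assert (hC : 0 <= C).
  { specialize (H (m/2) ltac:(lra)). destruct (Rle_dec 0 C); auto.
    assert (0 < m/2*(m/2)) by nra. nra. }
  set (e := Rmin (m/2) (Rmin 1 (Rabs a / (2 * (C + 1))))).
  assert (h1 : 0 < Rabs a / (2 * (C + 1))) by (apply Rdiv_lt_0_compat; lra).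
  assert (he1 : e <= m/2) by apply Rmin_l.
  assert (he2 : e <= 1) by (eapply Rle_trans; [apply Rmin_r|apply Rmin_l]).
  assert (he3 : e <= Rabs a / (2 * (C + 1))) by (eapply Rle_trans; [apply Rmin_r|apply Rmin_r]).
  assert (he0 : 0 < e) by (unfold e; repeat apply Rmin_glb_lt; lra).
  specialize (H e ltac:(lra)).
  assert (C * e * e <= C * e) by (assert (0 <= C * e) by nra; nra).
  assert ((C+1) * e <= Rabs a / 2).
  { apply Rmult_le_compat_l with (r := C + 1) in he3; [|lra].
    replace ((C + 1) * (Rabs a / (2 * (C + 1)))) with (Rabs a / 2) in he3 by (field; lra). auto. }
  nra.
Qed.

Lemma G_small mu sigma e : 0 < sigma -> 0 < e -> 0 <= Gf mu sigma e <= K1 mu sigma * e * e.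
Proof.
  intros hs he. unfold Gf. split.
  - apply RInt_ge_0; [lra | apply exRI; intros; apply g_cont; auto |].
    intros; apply g_ge0; auto.
  - assert (Hc : @eq R (RInt (fun _ : R => K1 mu sigma * e) 0 e) (K1 mu sigma * e * e))
      by (rewrite RInt_const_R; ring).
    rewrite <- Hc.
    apply RInt_le; [lra | apply exRI; intros; apply g_cont; auto | apply exRI; intros; apply continuous_const |].
    intros t ht. pose proof (g_le_lin mu sigma t hs). rewrite Rabs_right in H by lra.
    assert (0 < K1 mu sigma) by (unfold K1; pose proof (c0_pos sigma hs); pose proof (exp_pos (2 * sigma ^ 2 - 2 * mu)); nra).
    nra.
Qed.

Lemma E_vf_small mu sigma e : 0 < sigma -> 0 < e <= exp mu ->
  0 <= E (vf mu sigma e) + sP <= exp (2 * sigma^2 - 2 * mu) * (e * e) / sP.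
Proof.
  intros hs he. split. pose proof (E_ge (vf mu sigma e)). lra.
  assert (hv : vf mu sigma e <= 0).
  { unfold vf. pose proof (ln_le' e (exp mu) ltac:(lra) ltac:(lra)). rewrite ln_exp in H.
    pose proof sqrt2_pos. apply Rmult_le_reg_r with (sigma * sqrt 2). nra.
    unfold Rdiv. rewrite Rmult_assoc, Rinv_l by nra. nra. }
  eapply Rle_trans; [apply E_close_neg; auto|].
  rewrite ge_vf by auto. pose proof sP_pos. unfold Rdiv. apply Rmult_le_compat_r.
  left; apply Rinv_0_lt_compat; auto.
  apply qf_le_small; lra.
Qed.

Lemma G_formula mu sigma X : 0 < sigma -> 0 < X ->
  Gf mu sigma X = 1/2 + E (vf mu sigma X) / sqrt PI.
Proof.
  intros hs hX.
  set (a := Gf mu sigma X - E (vf mu sigma X) / sqrt PI - 1/2).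
  cut (a = 0). { unfold a. lra. }
  pose proof sP_pos.
  apply (small_zero a (K1 mu sigma + exp (2 * sigma^2 - 2 * mu) / (sP * sqrt PI)) (Rmin X (exp mu))).
  { apply Rmin_glb_lt; auto. apply exp_pos. }
  intros e he.
  assert (he1 : e < X) by (eapply Rlt_le_trans; [apply he|apply Rmin_l]).
  assert (he2 : e < exp mu) by (eapply Rlt_le_trans; [apply he|apply Rmin_r]).
  assert (Hc : Gf mu sigma e - E (vf mu sigma e) / sqrt PI = Gf mu sigma X - E (vf mu sigma X) / sqrt PI).
  { apply (const_eq (fun X => Gf mu sigma X - E (vf mu sigma X) / sqrt PI)); [lra| |].
    - intros y hy. apply Phi_deriv; auto; lra.
    - intros y hy. apply exd_cont. eexists. apply Phi_deriv; auto; lra. }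
  assert (ha : a = Gf mu sigma e - (E (vf mu sigma e) + sP) / sqrt PI).
  { unfold a. rewrite <- Hc. rewrite sqrtPI_eq. field. lra. }
  pose proof (G_small mu sigma e hs ltac:(lra)).
  pose proof (E_vf_small mu sigma e hs ltac:(lra)).
  rewrite ha. rewrite sqrtPI_eq.
  assert (0 <= (E (vf mu sigma e) + sP) / (2 * sP)) by (apply Rle_mult_inv_pos; lra).
  assert ((E (vf mu sigma e) + sP) / (2 * sP) <= exp (2 * sigma ^ 2 - 2 * mu) / (sP * (2 * sP)) * e * e).
  { replace (exp (2 * sigma ^ 2 - 2 * mu) / (sP * (2 * sP)) * e * e) with
      ((exp (2 * sigma ^ 2 - 2 * mu) * (e * e) / sP) / (2 * sP)) by (field; lra).
    unfold Rdiv at 1 3. apply Rmult_le_compat_r. left; apply Rinv_0_lt_compat; lra. lra. }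
  unfold Rabs. destruct (Rcase_abs _); nra.
Qed.

Lemma G_nonpos mu sigma x : x <= 0 -> Gf mu sigma x = 0.
Proof.
  intros hx. unfold Gf. rewrite (RInt_ext_R _ (fun _ => 0)).
  - rewrite RInt_const_R. ring.
  - intros t ht. rewrite Rmin_right, Rmax_left in ht by lra. apply g_nonpos; lra.
Qed.

Lemma G_le1 mu sigma x : 0 < sigma -> Gf mu sigma x <= 1.
Proof.
  intros hs. destruct (Rle_dec x 0). rewrite G_nonpos; auto; lra.
  rewrite G_formula by (auto; lra). rewrite sqrtPI_eq. pose proof sP_pos.
  pose proof (E_le (vf mu sigma x)).
  assert (E (vf mu sigma x) / (2 * sP) <= 1/2).
  { apply Rmult_le_reg_r with (2 * sP). lra. unfold Rdiv. rewrite Rmult_assoc, Rinv_l by lra. lra. }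
  lra.
Qed.

Lemma G_ge0 mu sigma x : 0 < sigma -> 0 <= Gf mu sigma x.
Proof.
  intros hs. destruct (Rle_dec x 0). rewrite G_nonpos; auto; lra.
  unfold Gf. apply RInt_ge_0; [lra | apply exRI; intros; apply g_cont; auto |].
  intros; apply g_ge0; auto.
Qed.

Definition Kt mu sigma := exp (2 * sigma^2 + 2 * mu) / (sP * (2 * sP)).
Definition Aconst mu sigma := 2 + exp mu * exp mu + 2 * Kt mu sigma.

Lemma Kt_pos mu sigma : 0 < Kt mu sigma.
Proof. unfold Kt. pose proof sP_pos. apply Rdiv_lt_0_compat. apply exp_pos. nra. Qed.

Lemma tail_bound mu sigma u : 0 < sigma -> 0 <= u ->
  1 - Gf mu sigma u <= Aconst mu sigma / (1 + u * u).
Proof.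
  intros hs hu. pose proof (Kt_pos mu sigma). pose proof (G_ge0 mu sigma u hs).
  pose proof (exp_pos mu).
  assert (hA : 1 <= Aconst mu sigma / (1 + u*u) \/ (1 <= u /\ exp mu <= u)).
  { destruct (Rle_dec 1 u); destruct (Rle_dec (exp mu) u); auto; left;
    apply Rmult_le_reg_r with (1 + u*u); try nra; unfold Rdiv; rewrite Rmult_assoc, Rinv_l by nra;
    unfold Aconst; nra. }
  destruct hA as [hA|[h1 h2]]; [lra|].
  rewrite G_formula by (auto; lra). rewrite sqrtPI_eq. pose proof sP_pos.
  assert (hv : 0 <= vf mu sigma u).
  { unfold vf. pose proof (ln_le' (exp mu) u ltac:(lra) ltac:(lra)) as hl. rewrite ln_exp in hl.
    pose proof sqrt2_pos. apply Rle_mult_inv_pos; nra. }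
  pose proof (E_close_pos _ hv) as hE. rewrite ge_vf in hE by auto.
  pose proof (qf_le_large mu sigma u hs ltac:(lra)) as hq.
  assert (e1 : 1 - (1 / 2 + E (vf mu sigma u) / (2 * sP)) = (sP - E (vf mu sigma u)) / (2 * sP)) by (field; lra).
  rewrite e1.
  assert (e2 : (sP - E (vf mu sigma u)) / (2 * sP) <= qf mu sigma u / (sP * (2 * sP))).
  { replace (qf mu sigma u / (sP * (2 * sP))) with ((qf mu sigma u / sP) / (2 * sP)) by (field; lra).
    unfold Rdiv at 1 3. apply Rmult_le_compat_r. left; apply Rinv_0_lt_compat; lra. lra. }
  eapply Rle_trans; [apply e2|].
  assert (e3 : qf mu sigma u / (sP * (2 * sP)) <= Kt mu sigma / (u * u)).
  { unfold Kt. apply Rmult_le_reg_r with (u * u * (sP * (2*sP))). apply Rmult_lt_0_compat; nra.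
    replace (qf mu sigma u / (sP * (2 * sP)) * (u * u * (sP * (2 * sP)))) with (qf mu sigma u * (u*u)) by (field; lra).
    replace (exp (2 * sigma ^ 2 + 2 * mu) / (sP * (2 * sP)) / (u * u) * (u * u * (sP * (2 * sP)))) with (exp (2 * sigma ^ 2 + 2 * mu)) by (field; split; nra).
    auto. }
  eapply Rle_trans; [apply e3|].
  apply Rmult_le_reg_r with (u * u * (1 + u*u)). apply Rmult_lt_0_compat; nra.
  replace (Kt mu sigma / (u * u) * (u * u * (1 + u * u))) with (Kt mu sigma * (1 + u*u)) by (field; nra).
  replace (Aconst mu sigma / (1 + u * u) * (u * u * (1 + u * u))) with (Aconst mu sigma * (u*u)) by (field; nra).
  unfold Aconst. assert (0 <= exp mu * exp mu * (u*u)) by (apply Rmult_le_pos; nra).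
  assert (huu : u * u >= 1) by nra.
  assert (Kt mu sigma * (u*u) >= Kt mu sigma * 1) by (apply Rmult_ge_compat_l; lra).
  assert (0 <= 2 * (u*u)) by nra.
  replace ((2 + exp mu * exp mu + 2 * Kt mu sigma) * (u * u)) with (2 * (u*u) + exp mu * exp mu * (u*u) + 2 * (Kt mu sigma * (u*u))) by ring.
  replace (Kt mu sigma * (1 + u * u)) with (Kt mu sigma * 1 + Kt mu sigma * (u*u)) by ring.
  lra.
Qed.

Lemma int_1mG mu sigma b : 0 < sigma -> 0 <= b ->
  RInt (fun u => 1 - Gf mu sigma u) 0 b <= Aconst mu sigma * (PI / 2).
Proof.
  intros hs hb.
  apply Rle_trans with (RInt (fun u => Aconst mu sigma * / (1 + u^2)) 0 b).
  - apply RInt_le; auto.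
    + apply exRI. intros z. apply exd_cont. auto_derive. exact (G_ex mu sigma z hs).
    + apply exRI. intros. apply exd_cont. auto_derive. nra.
    + intros x hx. pose proof (tail_bound mu sigma x hs ltac:(lra)). simpl. 
      replace (x * (x * 1)) with (x * x) by ring. auto.
  - rewrite RInt_scal_R.
    + rewrite RInt_atan, atan_0. pose proof (atan_bound b).
      assert (0 < Aconst mu sigma) by (unfold Aconst; pose proof (Kt_pos mu sigma); pose proof (exp_pos mu); nra).
      apply Rmult_le_compat_l; lra.
    + apply exRI. intros. apply exd_cont. auto_derive. nra.
Qed.

Lemma ext_cont (f : R -> R) :
  (forall x, 0 < x -> continuous f x) -> filterlim f (at_right 0) (locally (f 0)) ->
  forall x, continuous (fun s => f (Rmax 0 s)) x.
Proof.
  intros hpos h0 x. destruct (Rtotal_order x 0) as [h|[h|h]].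
  - apply continuous_ext_loc with (fun _ => f 0).
    + exists (mkposreal (-x) ltac:(lra)). intros y hy. change R in y.
      assert (hy' : Rabs (y - x) < -x) by exact hy. apply Rabs_def2 in hy'.
      rewrite Rmax_left by lra. auto.
    + apply continuous_const.
  - subst. apply filterlim_locally. intros eps.
    pose proof (proj1 (filterlim_locally f (f 0)) h0 eps) as H.
    destruct H as [d Hd].
    exists d. intros y hy. change R in y. rewrite (Rmax_left 0 0) by lra.
    destruct (Rle_dec y 0).
    + rewrite Rmax_left by lra. apply ball_center.
    + rewrite Rmax_right by lra. apply Hd; auto. lra.
  - apply continuous_ext_loc with f.
    + exists (mkposreal x h). intros y hy. change R in y.
      assert (hy' : Rabs (y - x) < x) by exact hy. apply Rabs_def2 in hy'.
      rewrite Rmax_right by lra. auto.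
    + apply hpos; auto.
Qed.

Lemma right_cont_of_quot (I : R -> R) (d : R) :
  filterlim (fun h => (I h - I 0) / h) (at_right 0) (locally d) ->
  filterlim I (at_right 0) (locally (I 0)).
Proof.
  intros H. apply filterlim_locally. intros eps.
  pose proof (proj1 (filterlim_locally _ d) H (mkposreal 1 Rlt_0_1)) as [d1 Hd1].
  assert (hpos : 0 < eps / (Rabs d + 1)) by (apply Rdiv_lt_0_compat; [apply cond_pos| pose proof (Rabs_pos d); lra]).
  exists (mkposreal (Rmin d1 (eps / (Rabs d + 1))) ltac:(apply Rmin_glb_lt; [apply cond_pos|auto])).
  intros y hy hy0. change R in y.
  assert (hy' : Rabs (y - 0) < Rmin d1 (eps / (Rabs d + 1))) by exact hy.
  rewrite Rminus_0_r, Rabs_right in hy' by lra.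
  assert (hb : ball 0 d1 y).
  { change (Rabs (y - 0) < d1). rewrite Rminus_0_r, Rabs_right by lra.
    eapply Rlt_le_trans; [apply hy'|apply Rmin_l]. }
  specialize (Hd1 y hb hy0).
  change (Rabs ((I y - I 0) / y - d) < 1) in Hd1.
  change (Rabs (I y - I 0) < eps).
  assert (hq : Rabs ((I y - I 0) / y) < Rabs d + 1).
  { pose proof (Rabs_triang_inv ((I y - I 0) / y) d). lra. }
  replace (I y - I 0) with (y * ((I y - I 0) / y)) by (field; lra).
  rewrite Rabs_mult, (Rabs_right y) by lra.
  assert (hy2 : y < eps / (Rabs d + 1)) by (eapply Rlt_le_trans; [apply hy'|apply Rmin_r]).
  assert (0 <= Rabs ((I y - I 0) / y)) by apply Rabs_pos.
  apply Rlt_le_trans with (y * (Rabs d + 1)). apply Rmult_lt_compat_l; lra.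
  apply Rmult_lt_compat_r with (r := Rabs d + 1) in hy2; [|pose proof (Rabs_pos d); lra].
  unfold Rdiv in hy2. rewrite Rmult_assoc, Rinv_l in hy2 by (pose proof (Rabs_pos d); lra). lra.
Qed.

Lemma conv_int_cont mu sigma (J : R -> R) t : 0 < sigma -> (forall x, continuous J x) ->
  forall s, continuous (fun s => lognormal mu sigma (t - s) * J s) s.
Proof.
  intros hs hJ s. apply (continuous_mult (K:=R_AbsRing) (fun s => lognormal mu sigma (t - s)) J).
  - apply (continuous_comp (fun s => t - s) (lognormal mu sigma)).
    + apply exd_cont. auto_derive. trivial.
    + apply g_cont; auto.
  - apply hJ.
Qed.

Lemma RInt_g_shift mu sigma t : 0 < sigma ->
  @eq R (RInt (fun s => lognormal mu sigma (t - s)) 0 t) (Gf mu sigma t).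
Proof.
  intros hs. 
  assert (H := RInt_comp_lin_R (lognormal mu sigma) (-1) t 0 t).
  replace (-1*0+t) with t in H by ring. replace (-1*t+t) with 0 in H by ring.
  assert (hc : forall z, continuous (fun y => lognormal mu sigma (-1 * y + t)) z).
  { intros; apply (continuous_comp (fun y => -1 * y + t) (lognormal mu sigma)).
    apply exd_cont; auto_derive; trivial. apply g_cont; auto. }
  assert (hg : forall a b, ex_RInt (lognormal mu sigma) a b) by (intros; apply exRI; intros; apply g_cont; auto).
  specialize (H (hg _ _)).
  rewrite RInt_scal_R in H by (apply exRI; auto).
  rewrite (RInt_swap_R (lognormal mu sigma) 0 t) in H by auto.
  rewrite (RInt_ext_R _ (fun y => lognormal mu sigma (-1 * y + t))) by (intros; f_equal; ring).
  unfold Gf. lra.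
Qed.

Lemma conv_nonneg mu sigma (J : R -> R) t : 0 < sigma -> (forall x, continuous J x) -> 0 <= t ->
  (forall s, 0 <= s <= t -> 0 <= J s) -> 0 <= RInt (fun s => lognormal mu sigma (t - s) * J s) 0 t.
Proof.
  intros hs hJ ht hp. apply RInt_ge_0; auto.
  - apply exRI. apply conv_int_cont; auto.
  - intros x hx. apply Rmult_le_pos. apply g_ge0; auto. apply hp; lra.
Qed.

Lemma conv_strict mu sigma (J : R -> R) t : 0 < sigma -> (forall x, continuous J x) -> 0 < t ->
  0 < J t -> (forall s, 0 <= s < t -> J s < J t) ->
  RInt (fun s => lognormal mu sigma (t - s) * J s) 0 t < J t.
Proof.
  intros hs hJ ht hJt hlt.
  apply Rlt_le_trans with (RInt (fun s => J t * lognormal mu sigma (t - s)) 0 t).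
  - apply RInt_lt; auto.
    + intros x _. apply (continuous_mult (K:=R_AbsRing) (fun _ => J t) (fun s => lognormal mu sigma (t - s))).
      apply continuous_const.
      apply (continuous_comp (fun s => t - s) (lognormal mu sigma)).
      apply exd_cont. auto_derive. trivial. apply g_cont; auto.
    + intros x _. apply conv_int_cont; auto.
    + intros x hx. pose proof (g_pos mu sigma (t - x) hs ltac:(lra)). specialize (hlt x ltac:(lra)).
      rewrite (Rmult_comm (J t)). apply Rmult_lt_compat_l; auto.
  - rewrite RInt_scal_R.
    + rewrite RInt_g_shift by auto. pose proof (G_le1 mu sigma t hs). nra.
    + apply exRI. intros. apply (continuous_comp (fun s => t - s) (lognormal mu sigma)).
      apply exd_cont. auto_derive. trivial. apply g_cont; auto.
Qed.

Definition Psi mu sigma (J : R -> R) (x : R) : R := RInt (fun t => J t * (1 - Gf mu sigma (x - t))) 0 x.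

Lemma Psi_f_Derive mu sigma (J : R -> R) u v : 0 < sigma ->
  Derive (fun z => J v * (1 - Gf mu sigma (z - v))) u = - (J v * lognormal mu sigma (u - v)).
Proof.
  intros hs. apply is_derive_unique. auto_derive.
  - exact (G_ex mu sigma (u - v) hs).
  - rewrite DG by auto. unfold Rminus. rewrite Rmult_1_l. rewrite <- Ropp_mult_distr_r. reflexivity.
Qed.

Lemma Psi_cont2 mu sigma (J : R -> R) x t : 0 < sigma -> (forall x, continuous J x) ->
  continuity_2d_pt (fun u v => Derive (fun z => J v * (1 - Gf mu sigma (z - v))) u) x t.
Proof.
  intros hs hJ.
  apply continuity_2d_pt_ext with (f := fun u v => - (J v * lognormal mu sigma (u - v))).
  { intros; symmetry; apply Psi_f_Derive; auto. }
  apply continuity_2d_pt_opp. apply continuity_2d_pt_mult.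
  - apply continuity_1d_2d_pt_comp with (f := J) (g := fun _ v => v).
    + apply cont_pt_of, hJ.
    + apply continuity_2d_pt_id2.
  - apply continuity_1d_2d_pt_comp with (f := lognormal mu sigma) (g := fun u v => u - v).
    + apply cont_pt_of, g_cont; auto.
    + apply continuity_2d_pt_minus. apply continuity_2d_pt_id1. apply continuity_2d_pt_id2.
Qed.

Lemma Psi_f_cont mu sigma (J : R -> R) x : 0 < sigma -> (forall x, continuous J x) ->
  forall t, continuous (fun t => J t * (1 - Gf mu sigma (x - t))) t.
Proof.
  intros hs hJ t. apply (continuous_mult (K:=R_AbsRing) J (fun t => 1 - Gf mu sigma (x - t))).
  - apply hJ.
  - apply exd_cont. auto_derive. exact (G_ex mu sigma (x - t) hs).
Qed.

Lemma Psi_deriv mu sigma (J : R -> R) x : 0 < sigma -> (forall x, continuous J x) ->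
  is_derive (Psi mu sigma J) x (J x - RInt (fun t => J t * lognormal mu sigma (x - t)) 0 x).
Proof.
  intros hs hJ. unfold Psi.
  assert (H := is_derive_RInt_param_bound_comp (fun u t => J t * (1 - Gf mu sigma (u - t)))
                 (fun _ => 0) (fun x => x) x 0 1).
  assert (hex : forall y a b, ex_RInt (fun t => J t * (1 - Gf mu sigma (y - t))) a b).
  { intros; apply exRI; apply Psi_f_cont; auto. }
  assert (hl2 : forall a b, locally_2d (fun x' t => continuity_2d_pt
       (fun u v => Derive (fun z => J v * (1 - Gf mu sigma (z - v))) u) x' t) a b).
  { intros a b. exists (mkposreal 1 Rlt_0_1). intros; apply Psi_cont2; auto. }
  eapply is_derive_ext; [intros; reflexivity|].
  replace (J x - RInt (fun t => J t * lognormal mu sigma (x - t)) 0 x) with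
    (RInt (fun t => Derive (fun u => J t * (1 - Gf mu sigma (u - t))) x) 0 x + - (J 0 * (1 - Gf mu sigma (x - 0))) * 0 + J x * (1 - Gf mu sigma (x - x)) * 1).
  - apply H.
    + apply filter_forall; auto.
    + exists (mkposreal 1 Rlt_0_1). apply filter_forall; auto.
    + exists (mkposreal 1 Rlt_0_1). apply filter_forall; auto.
    + apply (is_derive_const (K:=R_AbsRing) (V:=R_NormedModule) 0 x).
    + apply (is_derive_id (K:=R_AbsRing) x).
    + exists (mkposreal 1 Rlt_0_1). apply filter_forall. intros y t _. auto_derive.
      exact (G_ex mu sigma (y - t) hs).
    + intros; apply Psi_cont2; auto.
    + apply hl2.
    + apply hl2.
    + apply cont_pt_of, Psi_f_cont; auto.
    + apply cont_pt_of, Psi_f_cont; auto.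
  - rewrite (RInt_ext_R _ (fun t => - (J t * lognormal mu sigma (x - t)))).
    2: { intros; apply Psi_f_Derive; auto. }
    rewrite (RInt_ext_R (fun t => - (J t * lognormal mu sigma (x - t))) (fun t => -1 * (J t * lognormal mu sigma (x - t)))) by (intros; ring).
    rewrite RInt_scal_R.
    + replace (x - x) with 0 by ring. unfold Gf at 2. rewrite RInt_point_R. ring.
    + apply exRI. intros z. apply (continuous_mult (K:=R_AbsRing) J (fun t => lognormal mu sigma (x - t))).
      apply hJ. apply (continuous_comp (fun s => x - s) (lognormal mu sigma)).
      apply exd_cont. auto_derive. trivial. apply g_cont; auto.
Qed.

Lemma cR_mult (f g : R -> R) x : continuous f x -> continuous g x -> continuous (fun y => f y * g y) x.
Proof. intros; apply (continuous_mult (K:=R_AbsRing) f g); auto. Qed.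
Lemma cR_minus (f g : R -> R) x : continuous f x -> continuous g x -> continuous (fun y => f y - g y) x.
Proof. intros; apply (continuous_minus (V:=R_NormedModule) f g); auto. Qed.
Lemma cR_inv (f : R -> R) x : continuous f x -> f x <> 0 -> continuous (fun y => / f y) x.
Proof. intros; apply continuous_Rinv_comp; auto. Qed.
Lemma cR_const (c x : R) : continuous (fun _ : R => c) x.
Proof. apply continuous_const. Qed.

Lemma RInt_reflect (h : R -> R) b : (forall z, continuous h z) ->
  @eq R (RInt (fun s => h (b - s)) 0 b) (RInt h 0 b).
Proof.
  intros hc. 
  assert (H := RInt_comp_lin_R h (-1) b 0 b).
  replace (-1*0+b) with b in H by ring. replace (-1*b+b) with 0 in H by ring.
  assert (hc' : forall z, continuous (fun y => h (-1 * y + b)) z).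
  { intros; apply (continuous_comp (fun y => -1 * y + b) h).
    apply exd_cont; auto_derive; trivial. apply hc. }
  assert (hg : forall a b, ex_RInt h a b) by (intros; apply exRI; auto).
  specialize (H (hg _ _)).
  rewrite RInt_scal_R in H by (apply exRI; auto).
  rewrite (RInt_swap_R h 0 b) in H by auto.
  rewrite (RInt_ext_R _ (fun y => h (-1 * y + b))) by (intros; f_equal; ring).
  lra.
Qed.

Lemma Psi_bound mu sigma (J : R -> R) b M : 0 < sigma -> (forall x, continuous J x) -> 0 <= b ->
  (forall t, 0 <= t <= b -> 0 <= J t <= M) -> Psi mu sigma J b <= M * (Aconst mu sigma * (PI / 2)).
Proof.
  intros hs hJ hb hJb. unfold Psi.
  assert (hM : 0 <= M) by (specialize (hJb 0 ltac:(lra)); lra).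
  assert (hGc : forall z, continuous (fun u => 1 - Gf mu sigma u) z).
  { intros z. apply exd_cont. auto_derive. exact (G_ex mu sigma z hs). }
  apply Rle_trans with (RInt (fun t => M * (1 - Gf mu sigma (b - t))) 0 b).
  - apply RInt_le; auto.
    + apply exRI. apply Psi_f_cont; auto.
    + apply exRI. intros z. apply exd_cont. auto_derive. exact (G_ex mu sigma (b - z) hs).
    + intros x hx. specialize (hJb x ltac:(lra)). pose proof (G_le1 mu sigma (b - x) hs).
      apply Rmult_le_compat_r; lra.
  - rewrite RInt_scal_R.
    + rewrite (RInt_reflect (fun u => 1 - Gf mu sigma u) b hGc).
      apply Rmult_le_compat_l; auto. apply int_1mG; auto.
    + apply exRI. intros z. apply exd_cont. auto_derive. exact (G_ex mu sigma (b - z) hs).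
Qed.

Lemma cont_pos_near (f : R -> R) t : continuous f t -> 0 < f t ->
  exists d, 0 < d /\ forall s, Rabs (s - t) < d -> 0 < f s.
Proof.
  intros hc hp. pose proof (proj1 (filterlim_locally f (f t)) hc (mkposreal (f t) hp)) as [d Hd].
  exists d. split. apply cond_pos. intros s hs. specialize (Hd s hs).
  change (Rabs (f s - f t) < f t) in Hd. apply Rabs_def2 in Hd. lra.
Qed.

Lemma right_pos0 (f : R -> R) : filterlim f (at_right 0) (locally (f 0)) -> 0 < f 0 ->
  exists d, 0 < d /\ forall s, 0 <= s < d -> 0 < f s.
Proof.
  intros hc hp. pose proof (proj1 (filterlim_locally f (f 0)) hc (mkposreal (f 0) hp)) as [d Hd].
  exists d. split. apply cond_pos. intros s hs. destruct (Req_dec s 0) as [->|hne]; auto.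
  assert (hb : ball 0 d s) by (change (Rabs (s - 0) < d); rewrite Rminus_0_r, Rabs_right; lra).
  specialize (Hd s hb ltac:(lra)).
  change (Rabs (f s - f 0) < f 0) in Hd. apply Rabs_def2 in Hd. lra.
Qed.

Theorem proposition3p9
  (M beta I0 mu sigma : R) (I D : R -> R)
  (hM : 0 < M) (hbeta : 0 < beta) (hI0 : 0 < I0) (hI0M : I0 < M)
  (hsigma : 0 < sigma)
  (hder : forall t, 0 < t -> is_derive I t (D t))
  (hder0 : filterlim (fun h => (I h - I 0) / h) (at_right 0) (locally (D 0)))
  (hDcont : forall t, 0 < t -> continuous D t)
  (hDcont0 : filterlim D (at_right 0) (locally (D 0)))
  (heq : forall t, 0 <= t ->
     D t = beta * (M - I t) * Ia (lognormal mu sigma) I t)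
  (hinit : I 0 = I0) :
  exists L : R,
    is_RInt_gen (Ia (lognormal mu sigma) I) (at_point 0) (Rbar_locally p_infty) L.
Proof.
  pose (It := fun s => I (Rmax 0 s)).
  assert (hIcpos : forall x, 0 < x -> continuous I x).
  { intros x hx. apply exd_cont. eexists. apply hder; auto. }
  assert (hI0r : filterlim I (at_right 0) (locally (I 0))) by (eapply right_cont_of_quot; eauto).
  assert (hItc : forall x, continuous It x) by (apply ext_cont; auto).
  assert (hIt_eq : forall s, 0 <= s -> It s = I s) by (intros; unfold It; rewrite Rmax_right; auto).
  assert (hIt_neg : forall s, s <= 0 -> It s = I0) by (intros; unfold It; rewrite Rmax_left; auto).
  assert (hItd : forall t, 0 < t -> is_derive It t (D t)).
  { intros t ht. apply is_derive_ext_loc with I; [|apply hder; auto].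
    exists (mkposreal t ht). intros y hy. change R in y.
    assert (hy' : Rabs (y - t) < t) by exact hy. apply Rabs_def2 in hy'.
    unfold It. rewrite Rmax_right by lra. auto. }
  clearbody It.
  assert (hIa_eq : forall t, 0 <= t -> Ia (lognormal mu sigma) I t =
            It t - RInt (fun s => lognormal mu sigma (t - s) * It s) 0 t).
  { intros t ht. unfold Ia. rewrite hIt_eq by auto. f_equal. apply RInt_ext_R.
    intros x hx. rewrite Rmin_left, Rmax_right in hx by lra. rewrite hIt_eq by lra. reflexivity. }
  assert (hIa0 : Ia (lognormal mu sigma) I 0 = I0).
  { unfold Ia. rewrite RInt_point_R, hinit. ring. }
  assert (hD0 : 0 < D 0).
  { rewrite heq, hIa0, hinit by lra. apply Rmult_lt_0_compat; auto. apply Rmult_lt_0_compat; lra. }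
  assert (hopen : forall t, 0 <= t -> 0 < D t -> I t < M ->
            exists d, 0 < d /\ forall s, t <= s < t + d -> 0 < D s /\ I s < M).
  { intros t ht hDt hIt.
    assert (hd1 : exists d, 0 < d /\ forall s, t <= s < t + d -> 0 < D s).
    { destruct (Req_dec t 0) as [->|hne].
      - destruct (right_pos0 D hDcont0 hDt) as [d [hd Hd]]. exists d; split; auto.
        intros s hs; apply Hd; lra.
      - destruct (cont_pos_near D t (hDcont t ltac:(lra)) hDt) as [d [hd Hd]].
        exists d; split; auto. intros s hs; apply Hd. rewrite Rabs_right by lra. lra. }
    destruct hd1 as [d1 [hd1 Hd1]].
    destruct (cont_pos_near (fun s => M - It s) t) as [d2 [hd2 Hd2]].
    { apply cR_minus. apply cR_const. apply hItc. }
    { rewrite hIt_eq by auto. lra. }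
    exists (Rmin d1 d2). split. apply Rmin_glb_lt; auto.
    intros s hs. 
    assert (s < t + d1) by (pose proof (Rmin_l d1 d2); lra).
    assert (s < t + d2) by (pose proof (Rmin_r d1 d2); lra).
    split. apply Hd1; lra.
    assert (0 < M - It s) by (apply Hd2; rewrite Rabs_right; lra).
    rewrite hIt_eq in H1 by lra. lra. }
  assert (hDIt : forall x, 0 < x -> Derive (fun y : R => It y) x = D x).
  { intros; apply is_derive_unique; apply hItd; auto. }
  assert (hexIt : forall x, 0 < x -> ex_derive (fun y : R => It y) x).
  { intros; eexists; apply hItd; auto. }
  assert (hclosed : forall ts, 0 < ts -> (forall s, 0 <= s < ts -> 0 < D s /\ I s < M) ->
            0 < D ts /\ I ts < M).
  { intros ts hts hQ.
    assert (hmono : forall a b, 0 <= a < b -> b <= ts -> It a < It b).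
    { intros a b hab hb. apply (mono_lt It D a b); try lra.
      - intros x hx; apply hItd; lra.
      - intros; apply hItc.
      - intros x hx; apply hQ; lra. }
    assert (hIge : forall s, 0 <= s <= ts -> I0 <= It s).
    { intros s hs. destruct (Req_dec s 0) as [->|hne].
      - rewrite hIt_eq, hinit by lra; lra.
      - pose proof (hmono 0 s ltac:(lra) ltac:(lra)). rewrite hIt_eq, hinit in H by lra. lra. }
    (* Gronwall *)
    assert (hz : (M - It 0) * exp (beta * M * 0) <= (M - It ts) * exp (beta * M * ts)).
    { apply (mono_le (fun t => (M - It t) * exp (beta * M * t))
               (fun t => - D t * exp (beta * M * t) + (M - It t) * (beta * M * exp (beta * M * t)))); try lra.
      - intros x hx. auto_derive. first [apply hexIt; lra | split; [apply hexIt; lra|trivial]].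
        rewrite hDIt by lra. ring.
      - intros x hx. apply cR_mult. apply cR_minus. apply cR_const. apply hItc.
        apply exd_cont. auto_derive. trivial.
      - intros x hx. destruct (hQ x ltac:(lra)) as [hDx hIx].
        rewrite heq by lra. rewrite hIa_eq by lra.
        pose proof (conv_nonneg mu sigma It x hsigma hItc ltac:(lra)
                      (fun s hs => Rle_trans _ _ _ (Rlt_le _ _ hI0) (hIge s ltac:(lra)))).
        rewrite hIt_eq by lra.
        set (cv := RInt (fun s : R => lognormal mu sigma (x - s) * It s) 0 x) in *.
        pose proof (exp_pos (beta * M * x)).
        assert (0 <= (M - I x) * (M - (I x - cv))) by (apply Rmult_le_pos; lra).
        replace (- (beta * (M - I x) * (I x - cv)) * exp (beta * M * x) +
                 (M - I x) * (beta * M * exp (beta * M * x)))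
          with (beta * exp (beta * M * x) * ((M - I x) * (M - (I x - cv)))) by ring.
        apply Rmult_le_pos; [|auto]. apply Rmult_le_pos; lra. }
    rewrite Rmult_0_r, exp_0, Rmult_1_r, hIt_eq, hinit in hz by lra.
    rewrite hIt_eq in hz by lra.
    pose proof (exp_pos (beta * M * ts)).
    assert (hIts : I ts < M).
    { destruct (Rlt_le_dec (I ts) M); auto. exfalso.
      assert ((M - I ts) * exp (beta * M * ts) <= 0) by (apply Rmult_le_0_r; lra). lra. }
    split; auto.
    rewrite heq by lra. rewrite hIa_eq by lra.
    pose proof (conv_strict mu sigma It ts hsigma hItc hts
                  ltac:(pose proof (hIge ts ltac:(lra)); lra)
                  (fun s hs => hmono s ts hs ltac:(lra))).
    apply Rmult_lt_0_compat. apply Rmult_lt_0_compat; lra. lra. }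
  (* continuity induction *)
  assert (hall : forall T, 0 <= T -> forall s, 0 <= s <= T -> 0 < D s /\ I s < M).
  { intros T hT. destruct (classic (forall s, 0 <= s <= T -> 0 < D s /\ I s < M)) as [h|hn]; auto.
    exfalso.
    set (S := fun t => 0 <= t <= T /\ forall s, 0 <= s <= t -> 0 < D s /\ I s < M).
    assert (hS0 : S 0).
    { split; [lra|]. intros s hs. replace s with 0 by lra. split; auto. rewrite hinit; auto. }
    assert (hSb : bound S) by (exists T; intros x [hx _]; lra).
    destruct (completeness S hSb (ex_intro _ 0 hS0)) as [ts [hub hlub]].
    assert (hts0 : 0 <= ts) by (apply hub; auto).
    assert (hts1 : ts <= T) by (apply hlub; intros x [hx _]; lra).
    assert (hbelow : forall s, 0 <= s < ts -> 0 < D s /\ I s < M).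
    { intros s hs. destruct (classic (exists t, S t /\ s < t)) as [[t [[_ ht] hst]]|hno].
      - apply ht; lra.
      - exfalso. assert (ts <= s); [|lra]. apply hlub. intros x hx.
        destruct (Rle_dec x s); auto. exfalso. apply hno. exists x. split; auto. lra. }
    assert (hts : 0 < D ts /\ I ts < M).
    { destruct (Req_dec ts 0) as [->|hne]. split; auto; rewrite hinit; auto.
      apply hclosed; auto; lra. }
    assert (hQts : forall s, 0 <= s <= ts -> 0 < D s /\ I s < M).
    { intros s hs. destruct (Req_dec s ts) as [->|hne]; auto. apply hbelow; lra. }
    assert (htsT : ts < T).
    { destruct (Req_dec ts T) as [->|hne]; [|lra]. exfalso; apply hn; auto. }
    destruct (hopen ts hts0 (proj1 hts) (proj2 hts)) as [d [hd Hd]].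
    set (t' := Rmin (ts + d/2) T).
    assert (ht'1 : ts < t') by (apply Rmin_glb_lt; lra).
    assert (ht'2 : t' <= ts + d/2) by apply Rmin_l.
    assert (ht'3 : t' <= T) by apply Rmin_r.
    assert (hSt' : S t').
    { split; [lra|]. intros s hs. destruct (Rle_dec s ts); [apply hQts; lra|]. apply Hd; lra. }
    pose proof (hub t' hSt'). lra. }
  assert (hpos : forall t, 0 <= t -> 0 < D t /\ I t < M).
  { intros t ht. apply (hall t ht t). lra. }
  assert (hItlt : forall s, It s < M).
  { intros s. destruct (Rle_dec s 0). rewrite hIt_neg; auto.
    rewrite hIt_eq by lra. apply hpos; lra. }
  assert (hItge : forall s, I0 <= It s).
  { intros s. destruct (Rle_dec s 0). rewrite hIt_neg; auto; lra.
    rewrite <- hinit. rewrite <- (hIt_eq 0) by lra.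
    apply (mono_le It D 0 s); try lra.
    - intros x hx; apply hItd; lra.
    - intros; apply hItc.
    - intros x hx; left; apply hpos; lra. }
  pose (Dt := fun s => D (Rmax 0 s)).
  assert (hDtc : forall x, continuous Dt x) by (apply ext_cont; auto).
  assert (hDt_eq : forall s, 0 <= s -> Dt s = D s) by (intros; unfold Dt; rewrite Rmax_right; auto).
  assert (hDt_neg : forall s, s <= 0 -> Dt s = D 0) by (intros; unfold Dt; rewrite Rmax_left; auto).
  clearbody Dt.
  pose (Iat := fun s => Dt s * / (beta * (M - It s))).
  assert (hden : forall s, 0 < beta * (M - It s)) by (intros; apply Rmult_lt_0_compat; auto; specialize (hItlt s); lra).
  assert (hIatc : forall x, continuous Iat x).
  { intros x. unfold Iat. apply cR_mult; auto. apply cR_inv.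
    - apply cR_mult. apply cR_const. apply cR_minus. apply cR_const. apply hItc.
    - specialize (hden x). lra. }
  assert (hIa_Iat : forall x, 0 <= x -> Ia (lognormal mu sigma) I x = Iat x).
  { intros x hx. unfold Iat. rewrite hDt_eq, heq, hIt_eq by auto. rewrite <- (hIt_eq x) by auto.
    specialize (hItlt x). field. repeat split; lra. }
  assert (hIat_pos : forall x, 0 < Iat x).
  { intros x. unfold Iat. apply Rmult_lt_0_compat. 
    - destruct (Rle_dec x 0). rewrite hDt_neg; auto. rewrite hDt_eq by lra. apply hpos; lra.
    - apply Rinv_0_lt_compat; auto. }
  assert (hIat_eq : forall x, Iat x = It x - RInt (fun t => It t * lognormal mu sigma (x - t)) 0 x).
  { intros x. destruct (Rle_dec 0 x).
    - rewrite <- hIa_Iat by auto. rewrite hIa_eq by auto. f_equal. apply RInt_ext_R. intros; ring.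
    - assert (Iat x = Iat 0) by (unfold Iat; rewrite !hDt_neg, !hIt_neg by lra; reflexivity).
      rewrite H, <- hIa_Iat, hIa0 by lra. rewrite hIt_neg by lra.
      rewrite (RInt_ext_R _ (fun _ => 0)).
      + rewrite RInt_const_R. ring.
      + intros t ht. rewrite Rmin_right, Rmax_left in ht by lra. rewrite g_nonpos by lra. ring. }
  assert (hPsi_d : forall x, is_derive (Psi mu sigma It) x (Iat x)).
  { intros x. rewrite hIat_eq. apply Psi_deriv; auto. }
  assert (hDPsi : forall x, Derive (Psi mu sigma It) x = Iat x).
  { intros; apply is_derive_unique; auto. }
  assert (hPsi0 : Psi mu sigma It 0 = 0) by (unfold Psi; apply RInt_point_R).
  assert (hPsi_mono : forall a b, 0 <= a <= b -> Psi mu sigma It a <= Psi mu sigma It b).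
  { intros a b hab. apply (mono_le _ Iat); try lra.
    - intros; auto.
    - intros; apply exd_cont; eexists; apply hPsi_d.
    - intros; left; auto. }
  assert (hPsi_b : forall b, 0 <= b -> Psi mu sigma It b <= M * (Aconst mu sigma * (PI / 2))).
  { intros b hb. apply Psi_bound; auto. intros t _. split; [specialize (hItge t); lra | left; auto]. }
  set (S2 := fun y => exists b, 0 <= b /\ y = Psi mu sigma It b).
  assert (hS2b : bound S2).
  { exists (M * (Aconst mu sigma * (PI / 2))). intros y [b [hb ->]]. auto. }
  destruct (completeness S2 hS2b (ex_intro _ 0 (ex_intro _ 0 (conj (Rle_refl 0) (eq_sym hPsi0))))) as [L [hub hlub]].
  assert (hconv : filterlim (Psi mu sigma It) (Rbar_locally p_infty) (locally L)).
  { apply filterlim_locally. intros eps.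
    destruct (classic (exists b, 0 <= b /\ L - eps < Psi mu sigma It b)) as [[b0 [hb0 hb0']]|hno].
    - exists b0. intros b hb. change (Rabs (Psi mu sigma It b - L) < eps).
      pose proof (hPsi_mono b0 b ltac:(lra)).
      assert (Psi mu sigma It b <= L) by (apply hub; exists b; split; auto; lra).
      apply Rabs_def1; lra.
    - exfalso. assert (L <= L - eps); [|pose proof (cond_pos eps); lra].
      apply hlub. intros y [b [hb ->]]. destruct (Rle_dec (Psi mu sigma It b) (L - eps)); auto.
      exfalso; apply hno; exists b; split; auto; lra. }
  exists L.
  apply is_RInt_gen_ext with (f := Derive (Psi mu sigma It)).
  - apply Filter_prod with (Q := fun a => a = 0) (R := fun b => 0 < b).
    + reflexivity.
    + exists 0. auto.
    + intros a b ha hb x hx. subst a. simpl in hx. rewrite Rmin_left, Rmax_right in hx by lra.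
      rewrite hDPsi. symmetry. apply hIa_Iat. lra.
  - replace L with (L - 0) by ring. apply is_RInt_gen_Derive.
    + apply filter_forall. intros ab x _. eexists; apply hPsi_d.
    + apply filter_forall. intros ab x _. apply continuous_ext_loc with Iat.
      * apply filter_forall. intros; symmetry; auto.
      * auto.
    + intros P HP. unfold filtermap, at_point. rewrite hPsi0. apply locally_singleton; auto.
    + auto.
Qed.
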